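(* Let $\mathbf K\in\mathcal T_h$ with invertible affine map $T_{\mathbf K}:\widehat{\mathbf K}\to\mathbf K$, and let $w\in\mathcal{NC}_0^h$. Put $\hat w=w|_{\mathbf K}\circ T_{\mathbf K}\in\widehat{\mathbb P}^{(1)}_{SK}$. Then for each $i\in\{1,2,3\}$, writing $\hat y$ for the pair of coordinates other than $\hat x_i$, the functions $$\hat y\mapsto \hat w|_{\hat x_i=1}(\hat y)-\bigl(\widehat{\mathcal I}^{x_i^+}\hat w\bigr)(\hat y)\quad\text{and}\quad \hat y\mapsto \hat w|_{\hat x_i=-1}(\hat y)-\bigl(\widehat{\mathcal I}^{x_i^-}\hat w\bigr)(\hat y),\qquad \hat y\in[-1,1]^2,$$ coincide; equivalently, $w|_{F_{\mathbf K}^{x_i^+}}-\mathcal I_F^{x_i^+}(w|_{\mathbf K})$ and $w|_{F_{\mathbf K}^{x_i^-}}-\mathcal I_F^{x_i^-}(w|_{\mathbf K})$ agree at corresponding points $T_{\mathbf K}(\hat x)$ of the two opposite faces (points with the same $\hat y$).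
   Context: Let $\widehat{\mathbf K}=[-1,1]^3$ with coordinates $(\hat x_1,\hat x_2,\hat x_3)$; $P_2$ denotes polynomials of total degree at most $2$, and $\widehat{\mathbb P}^{(1)}_{SK}=P_2\oplus\mathrm{Span}\{\hat x_1\hat x_2\hat x_3,\hat x_1^2\hat x_2,\hat x_2^2\hat x_3,\hat x_3^2\hat x_1\}$. Let $\Omega\subset\mathbb R^3$ be a parallelepiped domain with boundary $\Gamma$, $\mathcal T_h$ a partition of $\Omega$ into parallelepipeds, each $\mathbf K=T_{\mathbf K}(\widehat{\mathbf K})$ with $T_{\mathbf K}$ invertible affine; $\mathcal{NC}_0^h$ is the space of functions $\phi$ with $\phi|_{\mathbf K}\circ T_{\mathbf K}\in\widehat{\mathbb P}^{(1)}_{SK}$ for all $\mathbf K$, continuous at all element vertices and face-centroids, and vanishing at those on $\Gamma$. Face interpolation: on the faces $\hat x_1=\pm1$ of $\widehat{\mathbf K}$ use the space $\mathrm{Span}\{1,\hat x_2,\hat x_3,\hat x_2\hat x_3,\hat x_3^2\}$; on the faces $\hat x_2=\pm1$ the space $\mathrm{Span}\{1,\hat x_3,\hat x_1,\hat x_3\hat x_1,\hat x_1^2\}$; on the faces $\hat x_3=\pm1$ the space $\mathrm{Span}\{1,\hat x_1,\hat x_2,\hat x_1\hat x_2,\hat x_2^2\}$. For a continuous $g$ on $\widehat{\mathbf K}$, $\widehat{\mathcal I}^{x_i^\pm}g$ is the unique element of the corresponding space (a function of the two coordinates other than $\hat x_i$) that agrees with $g$ at the four vertices and at the centroid of the face $\hat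 x_i=\pm1$. On $\mathbf K$, $F_{\mathbf K}^{x_i^\pm}=T_{\mathbf K}(\{\hat x_i=\pm1\})$ and $\mathcal I_F^{x_i^\pm}(w|_{\mathbf K})=(\widehat{\mathcal I}^{x_i^\pm}(w|_{\mathbf K}\circ T_{\mathbf K}))\circ T_{\mathbf K}^{-1}$ on that face. *)

(* Defs.v *)
From mathcomp Require Import all_boot all_order all_algebra.
From mathcomp Require Import reals.
Set Implicit Arguments. Unset Strict Implicit. Unset Printing Implicit Defensive.
Import Order.TTheory GRing.Theory Num.Theory.
Local Open Scope ring_scope.

Section Defs.
Variable R : realType.

(* points of R^3 are row vectors; coordinate j (j = 0,1,2 stands for x_1,x_2,x_3) *)
Definition crd (x : 'rV[R]_3) (j : nat) : R := x ord0 (inord j).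

Definition in_refcube (x : 'rV[R]_3) : Prop :=
  forall j : 'I_3, -1 <= x ord0 j <= 1.

Definition in_PSK (f : 'rV[R]_3 -> R) : Prop :=
  exists c : nat -> R, forall x, in_refcube x ->
    let x1 := crd x 0 in let x2 := crd x 1 in let x3 := crd x 2 in
    f x = c 0%N + c 1%N * x1 + c 2%N * x2 + c 3%N * x3
        + c 4%N * x1 ^+ 2 + c 5%N * x2 ^+ 2 + c 6%N * x3 ^+ 2
        + c 7%N * (x1 * x2) + c 8%N * (x2 * x3) + c 9%N * (x3 * x1)
        + c 10%N * (x1 * x2 * x3) + c 11%N * (x1 ^+ 2 * x2)
        + c 12%N * (x2 ^+ 2 * x3) + c 13%N * (x3 ^+ 2 * x1).

(* The point of the face  x_i = s  with the two remaining coordinates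
   y = (a, b) = (x_{i+1}, x_{i+2}) (indices cyclic mod 3):
   i=1: (a,b)=(x2,x3);  i=2: (a,b)=(x3,x1);  i=3: (a,b)=(x1,x2). *)
Definition face_pt (i : 'I_3) (s a b : R) : 'rV[R]_3 :=
  \row_(j < 3) if j == i then s
               else if val j == ((val i).+1 %% 3)%N then a else b.

(* The face space, written in the coordinates (a,b) above:
   span{1, a, b, a b, b^2}  (e.g. on x1 = +-1: span{1,x2,x3,x2 x3,x3^2}). *)
Definition in_face_space (p : R -> R -> R) : Prop :=
  exists d : nat -> R, forall a b,
    p a b = d 0%N + d 1%N * a + d 2%N * b + d 3%N * (a * b) + d 4%N * b ^+ 2.

Definition is_face_interp (i : 'I_3) (s : R) (g : 'rV[R]_3 -> R)
    (p : R -> R -> R) : Prop :=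
  in_face_space p /\
  (forall a b : R, (a = 1 \/ a = -1) -> (b = 1 \/ b = -1) ->
     p a b = g (face_pt i s a b)) /\
  p 0 0 = g (face_pt i s 0 0).

End Defs.

(* Main.v *)
Require Import Defs.
From mathcomp Require Import all_boot all_order all_algebra.
From mathcomp Require Import reals.
From mathcomp Require Import ring lra.
Import Order.TTheory GRing.Theory Num.Theory.
Local Open Scope ring_scope.

Section H.
Variable R : realType.

Definition FF (Vpp Vpm Vmp Vmm V0 a b : R) : R :=
  V0 + (Vpp + Vpm - Vmp - Vmm) / 4%:R * a + (Vpp - Vpm + Vmp - Vmm) / 4%:R * b
  + (Vpp - Vpm - Vmp + Vmm) / 4%:R * (a * b)
  + ((Vpp + Vpm + Vmp + Vmm) / 4%:R - V0) * b ^+ 2.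

Lemma FF_space (p : R -> R -> R) : in_face_space p -> forall a b,
  p a b = FF (p 1 1) (p 1 (-1)) (p (-1) 1) (p (-1) (-1)) (p 0 0) a b.
Proof. case=> d Hd a b; rewrite /FF !Hd; field; rewrite ?pnatr_eq0 //=. Qed.

Lemma FF_interp i s (g : 'rV[R]_3 -> R) p : is_face_interp i s g p -> forall a b,
  p a b = FF (g (face_pt i s 1 1)) (g (face_pt i s 1 (-1)))
             (g (face_pt i s (-1) 1)) (g (face_pt i s (-1) (-1)))
             (g (face_pt i s 0 0)) a b.
Proof.
case=> [Hs [Hv H0]] a b; rewrite FF_space // H0 !Hv //;
  by [left | right].
Qed.

Lemma FF_ok i s (g : 'rV[R]_3 -> R) : is_face_interp i s g
  (FF (g (face_pt i s 1 1)) (g (face_pt i s 1 (-1)))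
             (g (face_pt i s (-1) 1)) (g (face_pt i s (-1) (-1)))
             (g (face_pt i s 0 0))).
Proof.
split; last split.
- rewrite /in_face_space /FF.
  eexists => a b; rewrite -[_ + _ * b ^+ 2]/(_ + _ * b ^+ 2).
  instantiate (1 := fun k => match k with 0%N => _ | 1%N => _ | 2%N => _
    | 3%N => _ | _ => _ end); reflexivity.
- move=> a b [->|->] [->|->]; rewrite /FF; field; rewrite ?pnatr_eq0 //=.
- rewrite /FF; field; rewrite ?pnatr_eq0 //=.
Qed.

Lemma FF_sub (a1 a2 a3 a4 a5 b1 b2 b3 b4 b5 x y : R) :
  FF a1 a2 a3 a4 a5 x y - FF b1 b2 b3 b4 b5 x y =
  FF (a1 - b1) (a2 - b2) (a3 - b3) (a4 - b4) (a5 - b5) x y.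
Proof. rewrite /FF; ring. Qed.

Lemma crd_face (i : 'I_3) (s a b : R) (j : nat) : (j < 3)%N ->
  crd (face_pt i s a b) j =
  if j == val i then s else if j == ((val i).+1 %% 3)%N then a else b.
Proof. by move=> Hj; rewrite /crd /face_pt mxE -val_eqE /= inordK. Qed.

Lemma refcube_face (i : 'I_3) (s a b : R) : -1 <= s <= 1 -> -1 <= a <= 1 ->
  -1 <= b <= 1 -> in_refcube (face_pt i s a b).
Proof.
by move=> Hs Ha Hb j; rewrite /face_pt mxE; case: ifP => _ //; case: ifP.
Qed.

End H.

Theorem lemma4 (R : realType) (A : 'M[R]_3) (t : 'rV[R]_3)
    (w : 'rV[R]_3 -> R) :
  A \in unitmx ->
  in_PSK (fun xh => w (xh *m A + t)) ->
  forall i : 'I_3,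
    let wh := fun xh => w (xh *m A + t) in
    (exists pp pm : R -> R -> R,
        is_face_interp i 1 wh pp /\ is_face_interp i (-1) wh pm) /\
    (forall pp pm : R -> R -> R,
        is_face_interp i 1 wh pp -> is_face_interp i (-1) wh pm ->
        forall a b : R, -1 <= a <= 1 -> -1 <= b <= 1 ->
          wh (face_pt i 1 a b) - pp a b = wh (face_pt i (-1) a b) - pm a b).
Proof.
move=> _ [c Hc] i wh; split.
  by do 2 eexists; split; apply: FF_ok.
have key : exists e : nat -> R, forall a b : R, -1 <= a <= 1 -> -1 <= b <= 1 ->
   wh (face_pt i 1 a b) - wh (face_pt i (-1) a b) =
   2%:R * (e 0%N + e 1%N * a + e 2%N * b + e 3%N * (a * b) + e 4%N * b ^+ 2).
  have I1 : -1 <= (1 : R) <= 1 by apply/andP; split; lra.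
  have Im : -1 <= (-1 : R) <= 1 by apply/andP; split; lra.
  case: i => [[|[|[|k]]] Hi] //=.
  - exists (fun k => match k with 0%N => c 1%N | 1%N => c 7%N | 2%N => c 9%N
       | 3%N => c 10%N | _ => c 13%N end) => a b Ha Hb.
    rewrite /wh !Hc; try by apply: refcube_face.
    rewrite !crd_face //=; ring.
  - exists (fun k => match k with 0%N => c 2%N | 1%N => c 8%N | 2%N => c 7%N
       | 3%N => c 10%N | _ => c 11%N end) => a b Ha Hb.
    rewrite /wh !Hc; try by apply: refcube_face.
    rewrite !crd_face //=; ring.
  - exists (fun k => match k with 0%N => c 3%N | 1%N => c 9%N | 2%N => c 8%N
       | 3%N => c 10%N | _ => c 12%N end) => a b Ha Hb.
    rewrite /wh !Hc; try by apply: refcube_face.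
    rewrite !crd_face //=; ring.
case: key => e He.
move=> pp pm Hp Hm a b Ha Hb.
have I1 : -1 <= (1 : R) <= 1 by apply/andP; split; lra.
have Im : -1 <= (-1 : R) <= 1 by apply/andP; split; lra.
have I0 : -1 <= (0 : R) <= 1 by apply/andP; split; lra.
set q := fun a b : R =>
   2%:R * (e 0%N + e 1%N * a + e 2%N * b + e 3%N * (a * b) + e 4%N * b ^+ 2).
have Hq : in_face_space q.
  by exists (fun k => 2%:R * e k) => x y; rewrite /q; ring.
apply/eqP; rewrite -subr_eq0; apply/eqP.
have -> : wh (face_pt i 1 a b) - pp a b - (wh (face_pt i (-1) a b) - pm a b)
   = (wh (face_pt i 1 a b) - wh (face_pt i (-1) a b)) - (pp a b - pm a b) by ring.
rewrite (@FF_interp _ _ _ _ _ Hp) (@FF_interp _ _ _ _ _ Hm) FF_sub !He //.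
have E := @FF_space _ _ Hq a b.
rewrite /q /= in E; rewrite E subrr //.
Qed.
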